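(* Let $\lambda$ be an infinite cardinal and let $G$ be a graph on vertex set $\lambda^+$ with chromatic number $\lambda^+$. Then there is a function $f:\lambda^+\to\lambda^+$ such that for every closed unbounded set $C\subseteq\lambda^+$, the subgraph of $G$ induced on $\bigcup\{[\alpha,f(\alpha)]:\alpha\in C\}$ has chromatic number $\lambda^+$.
   Context: $[\alpha,\beta]$ denotes the interval of ordinals $\{\gamma:\alpha\le\gamma\le\beta\}$ (empty if $\beta<\alpha$). *)

(* Defs.v *)
From Stdlib Require Import Relations Wellfounded.

Set Implicit Arguments.

Definition injective {A B : Type} (f : A -> B) : Prop :=
  forall x y, f x = f y -> x = y.

Definition card_le (A B : Type) : Prop := exists f : A -> B, injective f.
Definition card_lt (A B : Type) : Prop := card_le A B /\ ~ card_le B A.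

Definition infinite_type (L : Type) : Prop := card_le nat L.

Record well_order (T : Type) (lt : T -> T -> Prop) : Prop := {
  wo_wf    : well_founded lt;
  wo_trans : forall a b c, lt a b -> lt b c -> lt a c;
  wo_total : forall a b, lt a b \/ a = b \/ lt b a
}.

Definition le_of {T : Type} (lt : T -> T -> Prop) (a b : T) : Prop :=
  lt a b \/ a = b.

(* (T, lt) has order type lambda^+ where lambda = |L|: every proper initial
   segment has cardinality <= |L|, but T itself does not. *)
Definition is_succ_cardinal_of (L T : Type) (lt : T -> T -> Prop) : Prop :=
  well_order lt /\
  (forall a : T, card_le {x : T | lt x a} L) /\
  ~ card_le T L.

Definition simple_graph {V : Type} (E : V -> V -> Prop) : Prop :=
  (forall x y, E x y -> E y x) /\ (forall x, ~ E x x).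

Definition colorable {V : Type} (E : V -> V -> Prop) (K : Type) : Prop :=
  exists c : V -> K, forall x y, E x y -> c x <> c y.

Definition chromatic_number_is {V : Type} (E : V -> V -> Prop) (K : Type) : Prop :=
  colorable E K /\ forall K' : Type, card_lt K' K -> ~ colorable E K'.

Definition induced {V : Type} (E : V -> V -> Prop) (S : V -> Prop)
  : {x : V | S x} -> {x : V | S x} -> Prop :=
  fun x y => E (proj1_sig x) (proj1_sig y).

Definition unbounded {T : Type} (lt : T -> T -> Prop) (C : T -> Prop) : Prop :=
  forall a, exists c, C c /\ lt a c.

(* Closed: whenever C is cofinal below a nonzero alpha (i.e. alpha is a limit
   point of C), alpha belongs to C. *)
Definition closed_set {T : Type} (lt : T -> T -> Prop) (C : T -> Prop) : Prop :=
  forall alpha,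
    (exists g, C g /\ lt g alpha) ->
    (forall b, lt b alpha -> exists g, C g /\ lt b g /\ lt g alpha) ->
    C alpha.

Definition club {T : Type} (lt : T -> T -> Prop) (C : T -> Prop) : Prop :=
  closed_set lt C /\ unbounded lt C.

Definition interval_union {T : Type} (lt : T -> T -> Prop) (f : T -> T)
  (C : T -> Prop) : T -> Prop :=
  fun g => exists alpha, C alpha /\ le_of lt alpha g /\ le_of lt g (f alpha).

(* Main.v *)
Require Import Defs.
From Stdlib Require Import Cantor ClassicalEpsilon Wellfounded List Lia FinFun Classical.
From Stdlib Require Import FunctionalExtensionality.

Definition eps {A} (a : A) (P : A -> Prop) : A := epsilon (inhabits a) P.
Lemma eps_spec {A} (a : A) (P : A -> Prop) : (exists x, P x) -> P (eps a P).
Proof. intros H. unfold eps. apply epsilon_spec; exact H. Qed.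


Lemma wo_irrefl {W} {R : W -> W -> Prop} (HW : well_order R) x : ~ R x x.
Proof.
  induction x as [x IH] using (well_founded_ind (wo_wf HW)).
  intros H. exact (IH x H H).
Qed.

Lemma wo_asym {W} {R : W -> W -> Prop} (HW : well_order R) {x y} : R x y -> ~ R y x.
Proof. intros H1 H2. apply (wo_irrefl HW x). exact (wo_trans HW _ _ _ H1 H2). Qed.

Lemma le_lt_trans {W} {R : W -> W -> Prop} (HW : well_order R) {x y z} :
  le_of R x y -> R y z -> R x z.
Proof. intros [H|H] H2; [exact (wo_trans HW _ _ _ H H2)| subst; exact H2]. Qed.

Lemma lt_le_trans {W} {R : W -> W -> Prop} (HW : well_order R) {x y z} :
  R x y -> le_of R y z -> R x z.
Proof. intros H [H2|H2]; [exact (wo_trans HW _ _ _ H H2)| subst; exact H]. Qed.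

Lemma le_trans' {W} {R : W -> W -> Prop} (HW : well_order R) {x y z} :
  le_of R x y -> le_of R y z -> le_of R x z.
Proof. intros [H|H] H2; [left; exact (lt_le_trans HW H H2)| subst; exact H2]. Qed.

Lemma not_lt_le {W} {R : W -> W -> Prop} (HW : well_order R) {x y} :
  ~ R x y -> le_of R y x.
Proof. intros H. destruct (wo_total HW x y) as [h|[h|h]]; [contradiction|right; auto|left; auto]. Qed.

Lemma le_not_lt {W} {R : W -> W -> Prop} (HW : well_order R) {x y} :
  le_of R x y -> ~ R y x.
Proof. intros [H|H] H2; [exact (wo_asym HW H H2)| subst; exact (wo_irrefl HW _ H2)]. Qed.

Lemma le_antisym {W} {R : W -> W -> Prop} (HW : well_order R) {x y} :
  le_of R x y -> le_of R y x -> x = y.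
Proof. intros [H|H] H2; auto. exfalso; exact (le_not_lt HW H2 H). Qed.

Lemma wo_least {W} {R : W -> W -> Prop} (HW : well_order R) (P : W -> Prop) :
  (exists x, P x) -> exists x, P x /\ forall y, P y -> le_of R x y.
Proof.
  intros [x Px]. revert Px. induction x as [x IH] using (well_founded_ind (wo_wf HW)).
  intros Px. destruct (classic (exists y, P y /\ R y x)) as [[y [Py Ryx]]|N].
  - exact (IH y Ryx Py).
  - exists x. split; auto. intros y Py. apply not_lt_le; auto. intros h. apply N; eauto.
Qed.

Definition least {W} (R : W -> W -> Prop) (a : W) (P : W -> Prop) : W :=
  eps a (fun x => P x /\ forall y, P y -> le_of R x y).

Lemma least_spec {W} {R : W -> W -> Prop} (HW : well_order R) a P :
  (exists x, P x) -> P (least R a P) /\ forall y, P y -> le_of R (least R a P) y.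
Proof. intros H. unfold least. apply (eps_spec a (fun x => P x /\ forall y, P y -> le_of R x y)). apply wo_least; auto. Qed.

Lemma nat_least (P : nat -> Prop) n : P n -> exists m, P m /\ forall i, i < m -> ~ P i.
Proof.
  induction n as [n IH] using (well_founded_ind PeanoNat.Nat.lt_wf_0). intros Pn.
  destruct (classic (exists i, i < n /\ P i)) as [[i [Hi Pi]]|N].
  - exact (IH i Hi Pi).
  - exists n; split; auto. intros i Hi Pi. apply N; eauto.
Qed.

Lemma pigeon (g : nat -> nat) K : (forall n, g n <= K) -> (forall n m, g n = g m -> n = m) -> False.
Proof.
  intros Hb Hi.
  assert (H : length (map g (seq 0 (S (S K)))) <= length (seq 0 (S K))).
  { apply NoDup_incl_length.
    - apply Injective_map_NoDup. intros a b; apply Hi. apply seq_NoDup.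
    - intros x Hx. apply in_map_iff in Hx. destruct Hx as [y [<- _]].
      apply in_seq. specialize (Hb y). lia. }
  rewrite length_map, !length_seq in H. lia.
Qed.

Definition hs {W} (R : W -> W -> Prop) x := exists y, R x y.
Definition succ {W} (R : W -> W -> Prop) (x : W) : W := least R x (fun y => R x y).
Fixpoint itS {W} (R : W -> W -> Prop) (k : nat) (l : W) : W :=
  match k with 0 => l | S k => succ R (itS R k l) end.
Definition limp {W} (R : W -> W -> Prop) l := forall y, R y l -> exists z, R y z /\ R z l.
Definition chain {W} (R : W -> W -> Prop) l k := forall i, i < k -> hs R (itS R i l).
Definition infb {W} (R : W -> W -> Prop) l := forall i, hs R (itS R i l).

Lemma succ_spec {W} {R : W -> W -> Prop} (HW : well_order R) {x} :
  hs R x -> R x (succ R x) /\ forall z, R x z -> le_of R (succ R x) z.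
Proof. intros H. unfold succ. apply (least_spec HW). exact H. Qed.

Lemma succ_inj {W} {R : W -> W -> Prop} (HW : well_order R) a b :
  hs R a -> hs R b -> succ R a = succ R b -> a = b.
Proof.
  intros Ha Hb E. destruct (succ_spec HW Ha) as [A1 A2]. destruct (succ_spec HW Hb) as [B1 B2].
  destruct (wo_total HW a b) as [h|[h|h]]; auto; exfalso.
  - pose proof (A2 b h) as h2. rewrite E in h2. exact (le_not_lt HW h2 B1).
  - pose proof (B2 a h) as h2. rewrite <- E in h2. exact (le_not_lt HW h2 A1).
Qed.

Lemma succ_not_lim {W} {R : W -> W -> Prop} (HW : well_order R) {y} :
  hs R y -> ~ limp R (succ R y).
Proof.
  intros H L. destruct (succ_spec HW H) as [A1 A2]. destruct (L y A1) as [z [z1 z2]].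
  exact (le_not_lt HW (A2 z z1) z2).
Qed.

Lemma decomp {W} {R : W -> W -> Prop} (HW : well_order R) x :
  exists l k, limp R l /\ chain R l k /\ itS R k l = x.
Proof.
  induction x as [x IH] using (well_founded_ind (wo_wf HW)).
  destruct (classic (limp R x)) as [L|NL].
  - exists x, 0. split; auto. split; auto. intros i Hi; lia.
  - apply not_all_ex_not in NL. destruct NL as [y Ny].
    apply imply_to_and in Ny. destruct Ny as [Ryx Nz].
    assert (Hy : hs R y) by (exists x; auto).
    destruct (succ_spec HW Hy) as [A1 A2].
    assert (Es : succ R y = x).
    { destruct (A2 x Ryx) as [h|h]; auto. exfalso; apply Nz; eauto. }
    destruct (IH y Ryx) as [l [k [Ll [Cl Ey]]]].
    exists l, (S k). split; auto. split.
    + intros i Hi. destruct (PeanoNat.Nat.eq_dec i k) as [->|ne].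
      * rewrite Ey; exact Hy.
      * apply Cl; lia.
    + simpl. rewrite Ey. exact Es.
Qed.

Lemma decomp_uniq {W} {R : W -> W -> Prop} (HW : well_order R) k : forall l k' l',
  limp R l -> limp R l' -> chain R l k -> chain R l' k' -> itS R k l = itS R k' l' -> l = l' /\ k = k'.
Proof.
  induction k as [|k IH]; intros l [|k'] l' L L' C C' E; simpl in E.
  - auto.
  - exfalso. subst l. apply (succ_not_lim HW (C' k' (PeanoNat.Nat.lt_succ_diag_r _))). exact L.
  - exfalso. rewrite <- E in L'. apply (succ_not_lim HW (C k (PeanoNat.Nat.lt_succ_diag_r _))). exact L'.
  - apply (succ_inj HW) in E; [|apply C; lia|apply C'; lia].
    destruct (IH l k' l' L L') as [h1 h2]; auto.
    + intros i Hi; apply C; lia.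
    + intros i Hi; apply C'; lia.
Qed.

Lemma fin_block_uniq {W} {R : W -> W -> Prop} (HW : well_order R) l l' :
  limp R l -> limp R l' -> ~ infb R l -> ~ infb R l' -> l = l'.
Proof.
  intros L L' N N'.
  apply not_all_ex_not in N. destruct N as [k Nk]. apply (nat_least (fun k => ~ hs R (itS R k l))) in Nk. destruct Nk as [k0 [N0 M0]].
  apply not_all_ex_not in N'. destruct N' as [k' Nk']. apply (nat_least (fun k => ~ hs R (itS R k l'))) in Nk'. destruct Nk' as [k1 [N1 M1]].
  assert (E : itS R k0 l = itS R k1 l').
  { destruct (wo_total HW (itS R k0 l) (itS R k1 l')) as [h|[h|h]]; auto; exfalso.
    - apply N0; exists (itS R k1 l'); exact h.
    - apply N1; exists (itS R k0 l); exact h. }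
  apply (decomp_uniq HW k0 l k1 l'); auto.
  - intros i Hi. apply NNPP. apply M0; auto.
  - intros i Hi. apply NNPP. apply M1; auto.
Qed.

Definition dpair {W} (R : W -> W -> Prop) (x : W) : W * nat :=
  eps (x, 0) (fun p => limp R (fst p) /\ chain R (fst p) (snd p) /\ itS R (snd p) (fst p) = x).

Lemma dpair_spec {W} {R : W -> W -> Prop} (HW : well_order R) x :
  limp R (fst (dpair R x)) /\ chain R (fst (dpair R x)) (snd (dpair R x)) /\
  itS R (snd (dpair R x)) (fst (dpair R x)) = x.
Proof.
  unfold dpair. apply (eps_spec (x,0) (fun p => limp R (fst p) /\ chain R (fst p) (snd p) /\ itS R (snd p) (fst p) = x)).
  destruct (decomp HW x) as [l [k H]]. exists (l, k). exact H.
Qed.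

Lemma exists_inf_lim {W} {R : W -> W -> Prop} (HW : well_order R) (j : nat -> W) :
  injective j -> exists l, limp R l /\ infb R l.
Proof.
  intros Hj. apply NNPP. intros N.
  destruct (dpair_spec HW (j 0)) as [Ls [_ _]]. set (ls := fst (dpair R (j 0))) in *.
  assert (Nls : ~ infb R ls) by (intros I; apply N; eauto).
  pose proof Nls as Nls'.
  apply not_all_ex_not in Nls'. destruct Nls' as [k Nk]. apply (nat_least (fun k => ~ hs R (itS R k ls))) in Nk. destruct Nk as [K [NK MK]].
  apply (pigeon (fun n => snd (dpair R (j n))) K).
  - intros n. destruct (dpair_spec HW (j n)) as [L1 [C1 E1]].
    assert (El : fst (dpair R (j n)) = ls).
    { apply (fin_block_uniq HW); auto. intros I; apply N; eauto. }
    destruct (Compare_dec.le_lt_dec (snd (dpair R (j n))) K) as [h|h]; auto.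
    exfalso. apply NK. rewrite <- El. apply C1. exact h.
  - intros n m E. apply Hj.
    destruct (dpair_spec HW (j n)) as [L1 [C1 E1]].
    destruct (dpair_spec HW (j m)) as [L2 [C2 E2]].
    assert (El : fst (dpair R (j n)) = fst (dpair R (j m))).
    { apply (fin_block_uniq HW); auto; intros I; apply N; eauto. }
    rewrite <- E1, <- E2, El, E. reflexivity.
Qed.

Lemma nat_prod_absorb {W} {R : W -> W -> Prop} (HW : well_order R) (j : nat -> W) :
  injective j -> exists phi : nat * W -> W, injective phi.
Proof.
  intros Hj. destruct (exists_inf_lim HW j Hj) as [l0 [L0 I0]].
  exists (fun p => let x := snd p in
    if excluded_middle_informative (infb R (fst (dpair R x)))
    then itS R (2 * to_nat (fst p, snd (dpair R x))) (fst (dpair R x))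
    else itS R (S (2 * to_nat (fst p, snd (dpair R x)))) l0).
  intros [n x] [m y]. cbv beta zeta. cbn [fst snd].
  destruct (dpair_spec HW x) as [Lx [Cx Ex]].
  destruct (dpair_spec HW y) as [Ly [Cy Ey]].
  destruct (excluded_middle_informative (infb R (fst (dpair R x)))) as [Ix|Ix];
  destruct (excluded_middle_informative (infb R (fst (dpair R y)))) as [Iy|Iy]; intros E;
  apply (decomp_uniq HW) in E; auto; try (intros i _; auto); destruct E as [E1 E2].
  - assert (P : (n, snd (dpair R x)) = (m, snd (dpair R y))) by (apply to_nat_inj; lia).
    injection P as -> P. rewrite <- Ex, <- Ey, E1, P. reflexivity.
  - lia.
  - lia.
  - assert (P : (n, snd (dpair R x)) = (m, snd (dpair R y))) by (apply to_nat_inj; lia).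
    injection P as -> P. rewrite <- Ex, <- Ey, P.
    rewrite (fin_block_uniq HW _ _ Lx Ly Ix Iy). reflexivity.
Qed.

Lemma sig_eq {A} {P : A -> Prop} (u v : {x | P x}) : proj1_sig u = proj1_sig v -> u = v.
Proof. destruct u as [x p], v as [y q]; simpl; intros ->. f_equal. apply proof_irrelevance. Qed.

Lemma wo_pullback {A B} {R : B -> B -> Prop} (g : A -> B) :
  well_order R -> injective g -> well_order (fun x y => R (g x) (g y)).
Proof.
  intros HW Hg. constructor.
  - apply wf_inverse_image. exact (wo_wf HW).
  - intros a b c h1 h2. exact (wo_trans HW _ _ _ h1 h2).
  - intros a b. destruct (wo_total HW (g a) (g b)) as [h|[h|h]]; auto.
Qed.

Definition sumR {T} (lt : T -> T -> Prop) (u v : T + nat) : Prop :=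
  match u, v with
  | inl a, inl b => lt a b
  | inl _, inr _ => True
  | inr _, inl _ => False
  | inr n, inr m => n < m
  end.

Lemma sumR_wo {T} {lt : T -> T -> Prop} : well_order lt -> well_order (sumR lt).
Proof.
  intros HW.
  assert (AL : forall a, Acc (sumR lt) (inl a)).
  { intros a. induction a as [a IH] using (well_founded_ind (wo_wf HW)).
    constructor. intros [b|n] h; simpl in h; [apply IH; exact h| contradiction]. }
  constructor.
  - intros [a|n]; [apply AL|].
    induction n as [n IH] using (well_founded_ind PeanoNat.Nat.lt_wf_0).
    constructor. intros [b|m] h; [apply AL| apply IH; exact h].
  - intros [a|n] [b|m] [c|k]; simpl; try tauto; try lia. apply (wo_trans HW).
  - intros [a|n] [b|m]; simpl; auto.
    + destruct (wo_total HW a b) as [h|[h|h]]; subst; auto.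
    + destruct (PeanoNat.Nat.lt_trichotomy n m) as [h|[h|h]]; subst; auto.
Qed.

Lemma no_inj_natL (L T : Type) (lt : T -> T -> Prop) :
  infinite_type L -> is_succ_cardinal_of L lt ->
  forall h : T -> nat * L, injective h -> False.
Proof.
  intros [j Hj] [HW [Hseg HnT]] h Hh.
  set (P := fun y : L => (exists x, snd (h x) = y) \/ (exists n, j n = y)).
  set (W := {y : L | P y}).
  assert (T0 : forall w : W, {t : T + nat | match t with inl x => snd (h x) = proj1_sig w | inr n => j n = proj1_sig w end}).
  { intros [y Py]. simpl.
    destruct (excluded_middle_informative (exists x, snd (h x) = y)) as [E|E].
    - apply constructive_indefinite_description in E. destruct E as [x Ex]. exists (inl x); exact Ex.
    - assert (E2 : exists n, j n = y) by (destruct Py; [contradiction|auto]).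
      apply constructive_indefinite_description in E2. destruct E2 as [n En]. exists (inr n); exact En. }
  set (g' := fun w => proj1_sig (T0 w)).
  assert (Hg' : injective g').
  { intros w1 w2 E. apply sig_eq. unfold g' in E.
    destruct (T0 w1) as [t1 H1], (T0 w2) as [t2 H2]; simpl in E; subst t2.
    destruct t1; congruence. }
  pose proof (wo_pullback g' (sumR_wo HW) Hg') as HWW.
  set (j' := fun n => exist P (j n) (or_intror (ex_intro _ n eq_refl)) : W).
  assert (Hj' : injective j').
  { intros a b E. apply Hj. exact (f_equal (@proj1_sig _ _) E). }
  destruct (nat_prod_absorb HWW j' Hj') as [phi Hphi].
  apply HnT.
  exists (fun x => proj1_sig (phi (fst (h x), exist P (snd (h x)) (or_introl (ex_intro _ x eq_refl))))).
  intros x y E. apply sig_eq in E. apply Hphi in E. apply Hh.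
  injection E as E1 E2.
  destruct (h x), (h y); simpl in *; congruence.
Qed.

Definition Iseg {L T} (lt : T -> T -> Prop) (d : L) (ii : forall a, {x | lt x a} -> L) (a x : T) : L :=
  match excluded_middle_informative (lt x a) with
  | left p => ii a (exist _ x p)
  | right _ => d
  end.

Lemma segs_inj {L T : Type} {lt : T -> T -> Prop} :
  is_succ_cardinal_of L lt ->
  exists ii : forall a, {x | lt x a} -> L, forall a, injective (ii a).
Proof.
  intros [_ [Hseg _]].
  assert (H : forall a, {f : {x | lt x a} -> L | injective f}).
  { intros a. apply constructive_indefinite_description. apply Hseg. }
  exists (fun a => proj1_sig (H a)). intros a. exact (proj2_sig (H a)).
Qed.

Lemma Iseg_inj {L T} (lt : T -> T -> Prop) (d : L) (ii : forall a, {x | lt x a} -> L) a x y :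
  injective (ii a) -> lt x a -> lt y a -> Iseg lt d ii a x = Iseg lt d ii a y -> x = y.
Proof.
  intros Hi hx hy. unfold Iseg.
  destruct (excluded_middle_informative (lt x a)) as [p|p]; [|contradiction].
  destruct (excluded_middle_informative (lt y a)) as [q|q]; [|contradiction].
  intros E. apply Hi in E. exact (f_equal (@proj1_sig _ _) E).
Qed.

Lemma no_max (L T : Type) (lt : T -> T -> Prop) :
  infinite_type L -> is_succ_cardinal_of L lt -> forall x, exists y, lt x y.
Proof.
  intros Hinf HS m. apply NNPP. intros N.
  pose proof (no_inj_natL L T lt Hinf HS) as NI.
  destruct Hinf as [j Hj]. destruct (segs_inj HS) as [ii Hii]. destruct HS as [HW HS'].
  apply (NI (fun x => if excluded_middle_informative (x = m) then (1, j 0) else (0, Iseg lt (j 0) ii m x))).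
  intros x y.
  assert (Lx : x <> m -> lt x m).
  { intros ne. destruct (wo_total HW x m) as [h|[h|h]]; auto; [contradiction| exfalso; apply N; eauto]. }
  assert (Ly : y <> m -> lt y m).
  { intros ne. destruct (wo_total HW y m) as [h|[h|h]]; auto; [contradiction| exfalso; apply N; eauto]. }
  destruct (excluded_middle_informative (x = m)) as [ex|ex];
  destruct (excluded_middle_informative (y = m)) as [ey|ey]; intros E; try congruence.
  injection E as E. apply (Iseg_inj lt (j 0) ii m); auto.
Qed.

Lemma bounded_seq (L T : Type) (lt : T -> T -> Prop) :
  infinite_type L -> is_succ_cardinal_of L lt ->
  forall a : nat -> T, exists b, forall n, lt (a n) b.
Proof.
  intros Hinf HS a.
  assert (Hle : exists b, forall n, le_of lt (a n) b).
  { apply NNPP. intros N.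
    pose proof (no_inj_natL L T lt Hinf HS) as NI.
    destruct Hinf as [j Hj]. destruct (segs_inj HS) as [ii Hii]. destruct HS as [HW HS'].
    assert (U : forall x, exists n, lt x (a n)).
    { intros x. apply NNPP. intros M. apply N. exists x. intros n.
      apply (not_lt_le HW). intros h. apply M; eauto. }
    apply (NI (fun x => let n := eps 0 (fun n => lt x (a n)) in (n, Iseg lt (j 0) ii (a n) x))).
    intros x y E. cbv zeta in E.
    pose proof (eps_spec 0 (fun n => lt x (a n)) (U x)) as Sx.
    pose proof (eps_spec 0 (fun n => lt y (a n)) (U y)) as Sy.
    injection E as E1 E2. rewrite E1 in E2, Sx.
    apply (Iseg_inj lt (j 0) ii _ _ _ (Hii _) Sx Sy E2). }
  destruct Hle as [b Hb]. destruct (no_max L T lt Hinf HS b) as [b' Hb'].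
  exists b'. intros n. exact (le_lt_trans (proj1 HS) (Hb n) Hb').
Qed.

Lemma T_inhabited (L T : Type) (lt : T -> T -> Prop) :
  is_succ_cardinal_of L lt -> exists t : T, True.
Proof.
  intros [_ [_ HnT]]. apply NNPP. intros N. apply HnT.
  exists (fun x => match N (ex_intro _ x I) with end). intros x; exfalso; eauto.
Qed.

Lemma seg_absorb (L T : Type) (lt : T -> T -> Prop) :
  infinite_type L -> is_succ_cardinal_of L lt ->
  forall a, exists b, lt a b /\ exists phi : nat * {x | lt x b} -> {x | lt x b}, injective phi.
Proof.
  intros Hinf HS a. pose proof (proj1 HS) as HW.
  set (nx := fun x => eps x (fun y => lt x y)).
  assert (Hnx : forall x, lt x (nx x)) by (intros x; apply (eps_spec x (fun y => lt x y)); apply (no_max L T lt Hinf HS)).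
  set (s := fun n => Nat.iter n nx a).
  assert (Ms : forall n m, n < m -> lt (s n) (s m)).
  { intros n m H. induction H.
    - apply Hnx.
    - exact (wo_trans HW _ _ _ IHle (Hnx _)). }
  destruct (bounded_seq L T lt Hinf HS s) as [b Hb].
  exists b. split; [exact (Hb 0)|].
  set (j := fun n => exist (fun x => lt x b) (s n) (Hb n)).
  assert (Hj : injective j).
  { intros n m E. apply (f_equal (@proj1_sig _ _)) in E. simpl in E.
    destruct (PeanoNat.Nat.lt_trichotomy n m) as [h|[h|h]]; auto; exfalso.
    - apply Ms in h. rewrite E in h. exact (wo_irrefl HW _ h).
    - apply Ms in h. rewrite E in h. exact (wo_irrefl HW _ h). }
  assert (Hp : injective (@proj1_sig T (fun x => lt x b))) by (intros u v; apply sig_eq).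
  exact (nat_prod_absorb (wo_pullback _ HW Hp) j Hj).
Qed.

Definition rho {T} {lt : T -> T -> Prop} (HW : well_order lt) (X : T -> Prop) : T -> T :=
  Fix (wo_wf HW) (fun _ => T)
    (fun t rec => least lt t (fun s => forall t' (H : lt t' t), X t' -> lt (rec t' H) s)).

Lemma rho_eq {T} {lt : T -> T -> Prop} (HW : well_order lt) X t :
  rho HW X t = least lt t (fun s => forall t', lt t' t -> X t' -> lt (rho HW X t') s).
Proof.
  unfold rho at 1. rewrite Fix_eq. reflexivity.
  intros x f g H. assert (E : f = g).
  { apply functional_extensionality_dep. intros y. apply functional_extensionality. intros p. apply H. }
  subst. reflexivity.
Qed.

Lemma rho_spec {T} {lt : T -> T -> Prop} (HW : well_order lt) X t :
  (forall t', lt t' t -> X t' -> lt (rho HW X t') (rho HW X t)) /\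
  (forall s, (forall t', lt t' t -> X t' -> lt (rho HW X t') s) -> le_of lt (rho HW X t) s) /\
  le_of lt (rho HW X t) t.
Proof.
  induction t as [t IH] using (well_founded_ind (wo_wf HW)).
  assert (Ex : exists s, forall t', lt t' t -> X t' -> lt (rho HW X t') s).
  { exists t. intros t' h _. destruct (IH t' h) as [_ [_ h2]]. exact (le_lt_trans HW h2 h). }
  destruct (least_spec HW t _ Ex) as [S1 S2].
  rewrite <- rho_eq in S1, S2. split; auto. split; auto. apply S2.
  intros t' h _. destruct (IH t' h) as [_ [_ h2]]. exact (le_lt_trans HW h2 h).
Qed.

Lemma bound_card (L T : Type) (lt : T -> T -> Prop) :
  is_succ_cardinal_of L lt -> forall K : Type, card_lt K T -> exists a, card_le K {x | lt x a}.
Proof.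
  intros HS K [[e He] NTK]. pose proof (proj1 HS) as HW.
  set (X := fun t => exists k, e k = t).
  set (r := rho HW X).
  assert (Rinj : forall x y, X x -> X y -> r x = r y -> x = y).
  { intros x y Hx Hy E. destruct (wo_total HW x y) as [h|[h|h]]; auto; exfalso.
    - destruct (rho_spec HW X y) as [A _]. specialize (A x h Hx). fold r in A. rewrite E in A.
      exact (wo_irrefl HW _ A).
    - destruct (rho_spec HW X x) as [A _]. specialize (A y h Hy). fold r in A. rewrite E in A.
      exact (wo_irrefl HW _ A). }
  destruct (classic (exists a, forall x, X x -> lt (r x) a)) as [[a Ha]|N].
  - exists a. exists (fun k => exist (fun x => lt x a) (r (e k)) (Ha _ (ex_intro _ k eq_refl))).
    intros k1 k2 E. apply (f_equal (@proj1_sig _ _)) in E. simpl in E.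
    apply He. apply Rinj; auto; eexists; eauto.
  - exfalso. apply NTK.
    assert (Hs : forall s, exists x, X x /\ le_of lt s (r x)).
    { intros s. apply NNPP. intros M. apply N. exists s. intros x Hx.
      apply NNPP. intros h. apply M. exists x. split; auto. apply (not_lt_le HW). exact h. }
    set (xs := fun s => least lt s (fun x => X x /\ le_of lt s (r x))).
    assert (Rxs : forall s, X (xs s) /\ r (xs s) = s).
    { intros s. destruct (least_spec HW s _ (Hs s)) as [[S1 S2] S3]. fold (xs s) in S1, S2, S3.
      split; auto. destruct S2 as [S2|S2]; auto. exfalso.
      destruct (rho_spec HW X (xs s)) as [_ [B _]]. fold r in B.
      destruct (classic (forall t', lt t' (xs s) -> X t' -> lt (r t') s)) as [Y|Y].
      - exact (le_not_lt HW (B s Y) S2).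
      - apply Y. intros t' h Xt'. apply NNPP. intros Z.
        specialize (S3 t' (conj Xt' (not_lt_le HW Z))). exact (le_not_lt HW S3 h). }
    assert (Hk : forall s, exists k, e k = xs s) by (intros s; exact (proj1 (Rxs s))).
    exists (fun s => proj1_sig (constructive_indefinite_description _ (Hk s))).
    intros s1 s2 E.
    destruct (constructive_indefinite_description _ (Hk s1)) as [k1 E1].
    destruct (constructive_indefinite_description _ (Hk s2)) as [k2 E2]. simpl in E. subst k2.
    rewrite <- (proj2 (Rxs s1)), <- (proj2 (Rxs s2)), <- E1, <- E2. reflexivity.
Qed.

Fixpoint seqit {T} (a : T) (g : nat -> T -> T) (k : nat) : T :=
  match k with 0 => a | S k => g k (seqit a g k) end.

Lemma club_inter (L T : Type) (lt : T -> T -> Prop) :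
  infinite_type L -> is_succ_cardinal_of L lt ->
  forall E : nat -> T -> Prop, (forall n, club lt (E n)) -> club lt (fun x => forall n, E n x).
Proof.
  intros Hinf HS E HE. pose proof (proj1 HS) as HW. split.
  - intros alpha [g [Dg Hg]] Hc n. apply (proj1 (HE n)).
    + exists g; auto.
    + intros b hb. destruct (Hc b hb) as [g' [D' H']]. exists g'; auto.
  - intros a.
    set (nxt := fun k y => eps y (fun z => E (fst (of_nat k)) z /\ lt y z)).
    set (x := seqit a nxt).
    assert (Sx : forall k, E (fst (of_nat k)) (x (S k)) /\ lt (x k) (x (S k))).
    { intros k. apply (eps_spec (x k) (fun z => E (fst (of_nat k)) z /\ lt (x k) z)).
      destruct (proj2 (HE (fst (of_nat k))) (x k)) as [c [Hc1 Hc2]]. eauto. }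
    assert (Mx : forall i j, i < j -> lt (x i) (x j)).
    { intros i j H. induction H.
      - apply Sx.
      - exact (wo_trans HW _ _ _ IHle (proj2 (Sx _))). }
    assert (Hit : forall n K, exists k, K <= k /\ fst (of_nat k) = n).
    { intros n K. exists (to_nat (n, K)). rewrite cancel_of_to. split; auto.
      pose proof (to_nat_non_decreasing n K). lia. }
    destruct (bounded_seq L T lt Hinf HS x) as [b Hb].
    destruct (least_spec HW b (fun y => forall k, lt (x k) y) (ex_intro _ b Hb)) as [S1 S2].
    set (s := least lt b (fun y => forall k, lt (x k) y)) in *.
    exists s. split; [|exact (S1 0)].
    intros n. apply (proj1 (HE n)).
    + destruct (Hit n 0) as [k [_ Hk]]. exists (x (S k)). split; auto.
      rewrite <- Hk. apply Sx.
    + intros c hc.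
      assert (Ex : exists k, le_of lt c (x k)).
      { apply NNPP. intros N. assert (B : forall k, lt (x k) c).
        { intros k. apply NNPP. intros M. apply N. exists k. apply (not_lt_le HW). exact M. }
        exact (le_not_lt HW (S2 c B) hc). }
      destruct Ex as [k Hk]. destruct (Hit n (S k)) as [k' [Hk' Hn]].
      exists (x (S k')). split; [rewrite <- Hn; apply Sx|]. split; auto.
      apply (le_lt_trans HW Hk). apply Mx. lia.
Qed.

Definition nextf {T} (lt : T -> T -> Prop) (E : T -> Prop) (a : T) : T :=
  least lt a (fun z => E z /\ lt a z).

Fixpoint Es {T} (lt : T -> T -> Prop) (Cf : (T -> T) -> T -> Prop) (n : nat) : T -> Prop :=
  match n with
  | 0 => fun _ => True
  | S n => fun x => Es lt Cf n x /\ Cf (nextf lt (Es lt Cf n)) x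
  end.

Lemma club_ext {T} (lt : T -> T -> Prop) (P Q : T -> Prop) :
  (forall x, P x <-> Q x) -> club lt P -> club lt Q.
Proof.
  intros H [Hc Hu]. split.
  - intros a [g [Qg hg]] hc. apply H. apply Hc.
    + exists g. split; auto. apply H; auto.
    + intros b hb. destruct (hc b hb) as [g' [Q' h']]. exists g'. split; auto. apply H; auto.
  - intros a. destruct (Hu a) as [c [Pc hc]]. exists c. split; auto. apply H; auto.
Qed.

Lemma nextf_spec {T} {lt : T -> T -> Prop} (HW : well_order lt) (E : T -> Prop) a :
  unbounded lt E -> E (nextf lt E a) /\ lt a (nextf lt E a) /\
    forall w, E w -> lt a w -> le_of lt (nextf lt E a) w.
Proof.
  intros HU. assert (Ex : exists z, E z /\ lt a z) by (destruct (HU a) as [c Hc]; exists c; exact Hc).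
  destruct (least_spec HW a (fun z => E z /\ lt a z) Ex) as [[S1 S2] S3].
  fold (nextf lt E a) in *. refine (conj S1 (conj S2 _)). intros w h1 h2. apply S3; auto.
Qed.

Definition goodset {T} (lt : T -> T -> Prop) (E : T -> T -> Prop) (A : T -> Prop) : Prop :=
  exists a (c : T -> T), (forall x, A x -> lt (c x) a) /\
    (forall x y, A x -> A y -> E x y -> c x <> c y).

Lemma Es_mono {T} (lt : T -> T -> Prop) Cf m n x : m <= n -> Es lt Cf n x -> Es lt Cf m x.
Proof. intros H. induction H; auto. intros h. apply IHle. exact (proj1 h). Qed.

Theorem lemma3 (L T : Type) (lt : T -> T -> Prop) (E : T -> T -> Prop) :
  infinite_type L ->
  is_succ_cardinal_of L lt ->
  simple_graph E ->
  chromatic_number_is E T ->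
  exists f : T -> T,
    forall C : T -> Prop, club lt C ->
      chromatic_number_is (induced E (interval_union lt f C)) T.
Proof.
  intros Hinf HS [Esym Eirr] Hchrom. pose proof (proj1 HS) as HW.
  apply NNPP. intros Nf.
  assert (Bad : forall f, exists C, club lt C /\ goodset lt E (interval_union lt f C)).
  { intros f. apply NNPP. intros M. apply Nf. exists f. intros C HC. split.
    - exists (fun x => proj1_sig x). intros x y H eq. unfold induced in H. rewrite eq in H.
      exact (Eirr _ H).
    - intros K' HK' [c Hc]. apply M. exists C. split; auto.
      destruct (bound_card L T lt HS K' HK') as [a [e He]].
      exists a, (fun x => match excluded_middle_informative (interval_union lt f C x) with
                          | left p => proj1_sig (e (c (exist _ x p)))
                          | right _ => x end).
      split.
      + intros x Ax. destruct (excluded_middle_informative (interval_union lt f C x)) as [p|p];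
          [apply proj2_sig|contradiction].
      + intros x y Ax Ay Exy.
        destruct (excluded_middle_informative (interval_union lt f C x)) as [p|p]; [|contradiction].
        destruct (excluded_middle_informative (interval_union lt f C y)) as [q|q]; [|contradiction].
        intros Eq. apply sig_eq in Eq. apply He in Eq. exact (Hc (exist _ x p) (exist _ y q) Exy Eq). }
  set (Cf := fun f => eps (fun _ : T => True) (fun C => club lt C /\ goodset lt E (interval_union lt f C))).
  assert (HCf : forall f, club lt (Cf f) /\ goodset lt E (interval_union lt f (Cf f))).
  { intros f. apply (eps_spec (fun _ : T => True) (fun C => club lt C /\ goodset lt E (interval_union lt f C))). apply Bad. }
  set (En := Es lt Cf).
  assert (ClE : forall n, club lt (En n)).
  { induction n as [|n IH].
    - split.
      + intros a _ _. exact I.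
      + intros a. destruct (no_max L T lt Hinf HS a) as [c Hc]. exists c. split; [exact I|exact Hc].
    - apply (club_ext lt (fun x => forall k, (match k with 0 => En n | _ => Cf (nextf lt (En n)) end) x)).
      + intros x. split.
        * intros H. split; [exact (H 0)| exact (H 1)].
        * intros [H1 H2] [|k]; auto.
      + apply (club_inter L T lt Hinf HS). intros [|k]; auto. apply HCf. }
  set (D := fun x => forall n, En n x).
  assert (ClD : club lt D) by (apply (club_inter L T lt Hinf HS); exact ClE).
  set (G := fun n => interval_union lt (nextf lt (En n)) (Cf (nextf lt (En n)))).
  assert (GG : forall n, goodset lt E (G n)) by (intros n; apply HCf).
  assert (Cov : forall v, (forall d, D d -> lt v d) \/ exists n, G n v).
  { intros v. apply NNPP. intros N. apply not_or_and in N. destruct N as [N1 N2].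
    apply not_all_ex_not in N1. destruct N1 as [d0 N1]. apply imply_to_and in N1. destruct N1 as [Dd0 N1].
    apply (not_lt_le HW) in N1.
    set (S := fun d => D d /\ le_of lt d v).
    assert (Mx : exists al, S al /\ forall d, S d -> le_of lt d al).
    { apply NNPP. intros NM.
      assert (NM' : forall d, S d -> exists d', S d' /\ lt d d').
      { intros d Sd. apply NNPP. intros Z. apply NM. exists d. split; auto. intros d' Sd'.
        apply (not_lt_le HW). intros h. apply Z. eauto. }
      destruct (proj2 ClD v) as [be [Dbe Hbe]].
      assert (Pbe : forall d, S d -> lt d be) by (intros d [_ Sd]; exact (le_lt_trans HW Sd Hbe)).
      destruct (least_spec HW be (fun y => forall d, S d -> lt d y) (ex_intro _ be Pbe)) as [P1 P2].
      set (s := least lt be (fun y => forall d, S d -> lt d y)) in *.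
      assert (Ds : D s).
      { apply (proj1 ClD).
        - exists d0. split; auto. apply P1. split; auto.
        - intros c hc.
          assert (Ex : exists d, S d /\ le_of lt c d).
          { apply NNPP. intros Z. assert (B : forall d, S d -> lt d c).
            { intros d Sd. apply NNPP. intros W. apply Z. exists d. split; auto. apply (not_lt_le HW); auto. }
            exact (le_not_lt HW (P2 c B) hc). }
          destruct Ex as [d [Sd Hd]]. destruct (NM' d Sd) as [d' [Sd' Hd']].
          exists d'. split; [exact (proj1 Sd')|]. split; [exact (le_lt_trans HW Hd Hd')| apply P1; auto]. }
      destruct (wo_total HW v s) as [h|[h|h]].
      - assert (Ex : exists d, S d /\ le_of lt v d).
        { apply NNPP. intros Z. assert (B : forall d, S d -> lt d v).
          { intros d Sd. apply NNPP. intros W. apply Z. exists d. split; auto. apply (not_lt_le HW); auto. }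
          exact (le_not_lt HW (P2 v B) h). }
        destruct Ex as [d [Sd Hd]]. assert (dv : d = v) by (apply (le_antisym HW); [exact (proj2 Sd)|exact Hd]).
        subst d. apply NM. exists v. split; auto. intros d [_ Hd']. exact Hd'.
      - assert (Ss : S s) by (split; auto; right; symmetry; exact h).
        exact (wo_irrefl HW _ (P1 s Ss)).
      - assert (Ss : S s) by (split; auto; left; exact h).
        exact (wo_irrefl HW _ (P1 s Ss)). }
    destruct Mx as [al [[Dal Halv] Hmax]].
    set (g := fun n => nextf lt (En n) al).
    assert (Sg : forall n, En n (g n) /\ lt al (g n) /\ forall w, En n w -> lt al w -> le_of lt (g n) w).
    { intros n. apply (nextf_spec HW). exact (proj2 (ClE n)). }
    assert (Mg : forall m n, m <= n -> le_of lt (g m) (g n)).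
    { intros m n h. destruct (Sg n) as [A1 [A2 _]]. destruct (Sg m) as [_ [_ B3]].
      apply B3; auto. exact (Es_mono lt Cf m n _ h A1). }
    assert (Gv : exists n, le_of lt v (g n)).
    { apply NNPP. intros Z.
      assert (B : forall n, le_of lt (g n) v).
      { intros n. apply (not_lt_le HW). intros h. apply Z. exists n. left; exact h. }
      destruct (least_spec HW v (fun y => forall n, le_of lt (g n) y) (ex_intro _ v B)) as [P1 P2].
      set (s := least lt v (fun y => forall n, le_of lt (g n) y)) in *.
      assert (Ds : D s).
      { intros m. destruct (classic (exists n, g n = s)) as [[n Hn]|Nn].
        - assert (Hm : g (Nat.max n m) = s).
          { apply (le_antisym HW); [apply P1|]. rewrite <- Hn. apply Mg. lia. }
          rewrite <- Hm. apply (Es_mono lt Cf m (Nat.max n m)); [lia|]. apply Sg.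
        - assert (Lt : forall n, lt (g n) s).
          { intros n. destruct (P1 n) as [h|h]; auto. exfalso; apply Nn; eauto. }
          apply (proj1 (ClE m)).
          + exists (g m). split; [apply Sg|apply Lt].
          + intros c hc.
            assert (Ex : exists n, lt c (g n)).
            { apply NNPP. intros Y. assert (B' : forall n, le_of lt (g n) c).
              { intros n. apply (not_lt_le HW). intros hh. apply Y; eauto. }
              exact (le_not_lt HW (P2 c B') hc). }
            destruct Ex as [n Hn]. exists (g (Nat.max n m)). split.
            * apply (Es_mono lt Cf m (Nat.max n m)); [lia|]. apply Sg.
            * split; [|apply Lt]. apply (lt_le_trans HW Hn). apply Mg. lia. }
      assert (Ss : S s) by (split; auto; apply P2; auto).
      pose proof (Hmax s Ss) as h1.
      assert (h2 : lt al s) by (apply (lt_le_trans HW (proj1 (proj2 (Sg 0)))); apply P1).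
      exact (le_not_lt HW h1 h2). }
    destruct Gv as [n Hn]. apply N2. exists n. exists al. split; [|split; auto].
    exact (proj2 (Dal (Datatypes.S n))). }
  destruct (T_inhabited L T lt HS) as [t0 _].
  destruct (proj2 ClD t0) as [d0 [Dd0 _]].
  set (ab := fun n => eps (t0, fun x : T => x) (fun p => (forall x, G n x -> lt (snd p x) (fst p)) /\
                 (forall x y, G n x -> G n y -> E x y -> snd p x <> snd p y))).
  assert (Hab : forall n, (forall x, G n x -> lt (snd (ab n) x) (fst (ab n))) /\
                 (forall x y, G n x -> G n y -> E x y -> snd (ab n) x <> snd (ab n) y)).
  { intros n. apply (eps_spec (t0, fun x : T => x) (fun p => (forall x, G n x -> lt (snd p x) (fst p)) /\
                 (forall x y, G n x -> G n y -> E x y -> snd p x <> snd p y))).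
    destruct (GG n) as [a [c Hc]]. exists (a, c). exact Hc. }
  destruct (bounded_seq L T lt Hinf HS (fun n => match n with 0 => d0 | S n => fst (ab n) end)) as [b0 Hb0].
  destruct (seg_absorb L T lt Hinf HS b0) as [b [Hbb [phi Hphi]]].
  set (col := fun v => match excluded_middle_informative (exists n, G n v) with
                       | left _ => let n := eps 0 (fun n => G n v) in (S n, snd (ab n) v)
                       | right _ => (0, v) end).
  assert (colb : forall v, lt (snd (col v)) b).
  { intros v. unfold col. destruct (excluded_middle_informative (exists n, G n v)) as [h|h]; simpl.
    - apply (wo_trans HW _ b0); auto. apply (wo_trans HW _ (fst (ab (eps 0 (fun n => G n v))))).
      + apply Hab. apply (eps_spec 0 (fun n => G n v)). exact h.
      + exact (Hb0 (S _)).
    - apply (wo_trans HW _ b0); auto. apply (wo_trans HW _ d0); [|exact (Hb0 0)].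
      destruct (Cov v) as [H|H]; [apply H; auto| contradiction]. }
  assert (colp : forall x y, E x y -> col x <> col y).
  { intros x y Exy. unfold col.
    destruct (excluded_middle_informative (exists n, G n x)) as [hx|hx];
    destruct (excluded_middle_informative (exists n, G n y)) as [hy|hy]; cbv zeta; intros Eq;
    injection Eq; clear Eq.
    - intros E2 E1. pose proof (eps_spec 0 (fun n => G n x) hx) as Gx.
      pose proof (eps_spec 0 (fun n => G n y) hy) as Gy.
      rewrite E1 in E2, Gx. exact (proj2 (Hab _) x y Gx Gy Exy E2).
    - intros _ E1. discriminate.
    - intros _ E1. discriminate.
    - intros E2. subst y. exact (Eirr _ Exy). }
  apply (proj2 Hchrom {x | lt x b}).
  - split.
    + exists (@proj1_sig T _). intros u v; apply sig_eq.
    + intros [f Hf]. apply (proj2 (proj2 HS)). destruct (proj1 (proj2 HS) b) as [g Hg].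
      exists (fun x => g (f x)). intros x y h. apply Hf, Hg, h.
  - exists (fun v => phi (fst (col v), exist _ (snd (col v)) (colb v))).
    intros x y Exy Eq. apply Hphi in Eq. injection Eq as E1 E2.
    apply (colp x y Exy). destruct (col x), (col y). simpl in *. congruence.
Qed.
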